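(* For either choice $\zeta\in\{q,-q^3\}$, the functions $\mathcal{F}(\lambda_1,\dots,\lambda_{L-1}\mid v_1,v_2)=\langle\bar0|\mathcal{E}(\lambda_{L-1})\cdots\mathcal{E}(\lambda_1)\mathcal{B}(v_2)\mathcal{B}(v_1)|0\rangle$ and $\bar{\mathcal{F}}(v_1,v_2\mid\lambda_1,\dots,\lambda_{L-1})=\langle\bar0|\mathcal{B}(v_2)\mathcal{B}(v_1)\mathcal{E}(\lambda_{L-1})\cdots\mathcal{E}(\lambda_1)|0\rangle$ are polynomials of degree $2L-1$ in each variable $x_i=e^{2\lambda_i}$ ($1\le i\le L-1$) separately, and also of degree $2L-1$ in each variable $y_1=e^{2v_1}$ and $y_2=e^{2v_2}$.
   Context: Let $q\in\mathbb{C}\setminus\{0\}$ (with a fixed choice of $q^{1/2}$) and $\zeta\in\{q,-q^3\}$ ($\zeta=q$: Fateev–Zamolodchikov model; $\zeta=-q^3$: Izergin–Korepin model). For $\lambda\in\mathbb{C}$ put $x=e^{2\lambda}$ and define $a(\lambda)=(x-\zeta)(x-q^2)$, $b(\lambda)=q(x-1)(x-\zeta)$, $c(\lambda)=(1-q^2)(x-\zeta)$, $\bar c(\lambda)=x(1-q^2)(x-\zeta)$, and for $\alpha,\beta\in\{1,2,3\}$, with $\beta'=4-\beta$: $d_{\alpha,\beta}(\lambda)=q(x-1)(x-\zeta)+x(q^2-1)(\zeta-1)$ if $\alpha=\beta=2$; $d_{\alpha,\beta}(\lambda)=(x-1)[(x-\zeta)+x(q^2-1)]$ if $\alpha=\beta\neq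 2$; $d_{\alpha,\beta}(\lambda)=(q^2-1)[\zeta(x-1)q^{(\alpha-\beta)/2}-\delta_{\alpha,\beta'}(x-\zeta)]$ if $\alpha<\beta$; $d_{\alpha,\beta}(\lambda)=x(q^2-1)[(x-1)q^{(\alpha-\beta)/2}-\delta_{\alpha,\beta'}(x-\zeta)]$ if $\alpha>\beta$. Let $e_1,e_2,e_3$ be the standard basis of $\mathbb{C}^3$ and $E_{\alpha,\beta}$ the unit matrices. Define $\mathcal{R}(\lambda)\in\mathrm{End}(\mathbb{C}^3\otimes\mathbb{C}^3)$ as the $9\times 9$ matrix in the ordered basis $e_1\otimes e_1,e_1\otimes e_2,e_1\otimes e_3,e_2\otimes e_1,e_2\otimes e_2,e_2\otimes e_3,e_3\otimes e_1,e_3\otimes e_2,e_3\otimes e_3$ (indices $1,\dots,9$) whose only nonzero entries (row, column) are: $(1,1)=a$; $(2,2)=b$, $(2,4)=c$; $(3,3)=d_{1,1}$, $(3,5)=d_{1,2}$, $(3,7)=d_{1,3}$; $(4,2)=\bar c$, $(4,4)=b$; $(5,3)=d_{2,1}$, $(5,5)=d_{2,2}$, $(5,7)=d_{2,3}$; $(6,6)=b$, $(6,8)=c$; $(7,3)=d_{3,1}$, $(7,5)=d_{3,2}$, $(7,7)=d_{3,3}$; $(8,6)=\bar c$, $(8,8)=b$; $(9,9)=a$ (all evaluated at $\lambda$). Fix $L\ge1$ and inhomogeneities $\mu_1,\dots,\mu_L\in\mathbb{C}$. With $V_a=V_1=\dots=V_L=\mathbb{C}^3$, let $\mathcal{T}(\lambda)=\mathcal{R}_{a1}(\lambda-\mu_1)\cdots\mathcal{R}_{aL}(\lambda-\mu_L)\in\mathrm{End}(V_a\otimes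 V_1\otimes\cdots\otimes V_L)$, where $\mathcal{R}_{aj}$ acts as $\mathcal{R}$ on $V_a\otimes V_j$. Write $\mathcal{T}(\lambda)=\sum_{\alpha,\beta}E_{\alpha,\beta}\otimes\mathcal{T}_\alpha^\beta(\lambda)$ and set $\mathcal{B}(\lambda)=\mathcal{T}_1^2(\lambda)$, $\mathcal{E}(\lambda)=\mathcal{T}_1^3(\lambda)$, operators on $V_1\otimes\cdots\otimes V_L$. Let $|0\rangle=e_1^{\otimes L}$ and let $\langle\bar0|$ be the dual vector of $e_3^{\otimes L}$. *)

(* Defs.v *)
From mathcomp Require Import all_boot all_algebra.
From mathcomp Require Import reals sequences trigo.
From mathcomp.real_closed Require Import complex.

Set Implicit Arguments.
Unset Strict Implicit.
Unset Printing Implicit Defensive.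
Import GRing.Theory Num.Theory.
Local Open Scope ring_scope.
Local Open Scope complex_scope.

Definition cexp {R : realType} (z : R[i]) : R[i] :=
  (expR (complex.Re z))%:C * (cos (complex.Im z) +i* sin (complex.Im z)).

Section RMatrix.
Variable R : realType.
Local Notation C := R[i].

(* s is the fixed square root q^{1/2}; q := s^2.  zeta is the parameter. *)
Variables (s zeta : C).
Definition qq : C := s ^+ 2.

(* entries of the R-matrix as functions of x = e^{2 lambda};
   indices alpha, beta are 1-based as in the paper. *)
Definition ra (x : C) : C := (x - zeta) * (x - qq ^+ 2).
Definition rb (x : C) : C := qq * (x - 1) * (x - zeta).
Definition rc (x : C) : C := (1 - qq ^+ 2) * (x - zeta).
Definition rcbar (x : C) : C := x * (1 - qq ^+ 2) * (x - zeta).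
Definition rd (al be : nat) (x : C) : C :=
  if al == be then
    (if al == 2 then qq * (x - 1) * (x - zeta) + x * (qq ^+ 2 - 1) * (zeta - 1)
     else (x - 1) * ((x - zeta) + x * (qq ^+ 2 - 1)))
  else if (al < be)%N then
    (qq ^+ 2 - 1) * (zeta * (x - 1) * s ^ (al%:Z - be%:Z)
                     - (al + be == 4)%:R * (x - zeta))
  else
    x * (qq ^+ 2 - 1) * ((x - 1) * s ^ (al%:Z - be%:Z)
                         - (al + be == 4)%:R * (x - zeta)).

(* the 9x9 matrix, (row, column) 1-based as in the paper *)
Definition rentry (x : C) (r c : nat) : C :=
  match r, c with
  | 1, 1 => ra x
  | 2, 2 => rb x | 2, 4 => rc x
  | 3, 3 => rd 1 1 x | 3, 5 => rd 1 2 x | 3, 7 => rd 1 3 x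
  | 4, 2 => rcbar x | 4, 4 => rb x
  | 5, 3 => rd 2 1 x | 5, 5 => rd 2 2 x | 5, 7 => rd 2 3 x
  | 6, 6 => rb x | 6, 8 => rc x
  | 7, 3 => rd 3 1 x | 7, 5 => rd 3 2 x | 7, 7 => rd 3 3 x
  | 8, 6 => rcbar x | 8, 8 => rb x
  | 9, 9 => ra x
  | _, _ => 0
  end.

Definition Rmat (lam : C) : 'M[C]_9 :=
  \matrix_(i < 9, j < 9) rentry (cexp (2 * lam)) i.+1 j.+1.

(* basis index of e_a (x) e_b (0-based a b) in the ordered basis *)
Definition idx9 (a b : 'I_3) : 'I_9 := inord (3 * a + b).

Definition Rent (lam : C) (a b c d : 'I_3) : C := Rmat lam (idx9 a b) (idx9 c d).

(* quantum space V_1 (x) ... (x) V_L: basis vectors indexed by states *)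
Definition state (L : nat) := {ffun 'I_L -> 'I_3}.

(* matrix element <i| T_al^be(lam) |j> of the monodromy matrix
   T(lam) = R_{a1}(lam - mu_1) ... R_{aL}(lam - mu_L) *)
Definition Tent (L : nat) (mu : 'I_L -> C) (lam : C) (al be : 'I_3)
    (i j : state L) : C :=
  \sum_(g : {ffun 'I_L.+1 -> 'I_3} | (g ord0 == al) && (g ord_max == be))
    \prod_(k < L) Rent (lam - mu k) (g (widen_ord (leqnSn L) k)) (i k)
                       (g (lift ord0 k)) (j k).

Definition i1 : 'I_3 := inord 0.
Definition i2 : 'I_3 := inord 1.
Definition i3 : 'I_3 := inord 2.

(* B(lam) = T_1^2(lam), E(lam) = T_1^3(lam) *)
Definition Bop L mu lam := @Tent L mu lam i1 i2.
Definition Eop L mu lam := @Tent L mu lam i1 i3.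

Definition opapp L (O : state L -> state L -> C) (v : state L -> C) : state L -> C :=
  fun i => \sum_(j : state L) O i j * v j.

(* |0> = e_1^{(x)L} and <0bar| = dual of e_3^{(x)L} *)
Definition vac L : state L -> C := fun i => (i == [ffun=> i1])%:R.
Definition covac L (v : state L -> C) : C := v [ffun=> i3].

Definition Ffun L (mu : 'I_L -> C) (lam : 'I_L.-1 -> C) (v1 v2 : C) : C :=
  covac (foldl (fun w k => opapp (Eop mu (lam k)) w)
               (opapp (Bop mu v2) (opapp (Bop mu v1) (@vac L)))
               (enum 'I_L.-1)).

Definition Fbarfun L (mu : 'I_L -> C) (lam : 'I_L.-1 -> C) (v1 v2 : C) : C :=
  covac (opapp (Bop mu v2) (opapp (Bop mu v1)
    (foldl (fun w k => opapp (Eop mu (lam k)) w) (@vac L) (enum 'I_L.-1)))).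

End RMatrix.

Definition upd {n : nat} {T : Type} (f : 'I_n -> T) (i : 'I_n) (t : T) : 'I_n -> T :=
  fun j => if j == i then t else f j.

(* Main.v *)
Require Import Defs.
From mathcomp Require Import all_boot all_algebra.
From mathcomp Require Import reals sequences trigo.
From mathcomp.real_closed Require Import complex.
From mathcomp Require Import ring zify.
Import GRing.Theory Num.Theory.
Local Open Scope ring_scope.
Set Warnings "-notation-overridden,-ambiguous-paths".
Set Implicit Arguments.
Unset Strict Implicit.
Unset Printing Implicit Defensive.
Lemma cexpD (R : realType) (a b : R[i]) : cexp (a + b) = cexp a * cexp b.
Proof.
case: a => a1 a2; case: b => b1 b2; rewrite /cexp /=.
rewrite exp.expRD cosD sinD.
apply/eqP; rewrite eq_complex /=; apply/andP; split; apply/eqP; ring.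
Qed.
Section Qd.
Variable C : fieldType.
Definition Qd (n : nat) (f : C -> C) :=
  exists p : {poly C}, (size p <= n.+1)%N /\ forall X, f X = p.[X].

Lemma Qd_c n c : Qd n (fun _ => c).
Proof. exists c%:P; split; last by move=> X; rewrite hornerC.
by apply: leq_trans (size_polyC_leq1 c) _. Qed.
Lemma Qd_x : Qd 1 (fun X => X).
Proof. exists 'X; split; last by move=> X; rewrite hornerX.
by rewrite size_polyX. Qed.
Lemma Qd_le n m f : Qd n f -> (n <= m)%N -> Qd m f.
Proof. by case=> p [Hs Hp] Hnm; exists p; split => //; apply: leq_trans Hs _. Qed.
Lemma Qd_add n m f g : Qd n f -> Qd m g -> Qd (maxn n m) (fun X => f X + g X).
Proof.
case=> p [Hp Ep] [q [Hq Eq]]; exists (p + q); split; last by move=> X; rewrite hornerD Ep Eq.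
apply: leq_trans (size_add _ _) _; rewrite -maxnSS geq_max.
by rewrite (leq_trans Hp (leq_maxl _ _)) (leq_trans Hq (leq_maxr _ _)).
Qed.
Lemma Qd_opp n f : Qd n f -> Qd n (fun X => - f X).
Proof. case=> p [Hp Ep]; exists (- p); split; last by move=> X; rewrite hornerN Ep.
by rewrite size_opp. Qed.
Lemma Qd_sub n m f g : Qd n f -> Qd m g -> Qd (maxn n m) (fun X => f X - g X).
Proof. move=> Hf Hg; exact: (Qd_add Hf (Qd_opp Hg)). Qed.
Lemma Qd_mul n m f g : Qd n f -> Qd m g -> Qd (n + m) (fun X => f X * g X).
Proof.
case=> p [Hp Ep] [q [Hq Eq]]; exists (p * q); split; last by move=> X; rewrite hornerM Ep Eq.
apply: leq_trans (size_mul_leq _ _) _.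
move: Hp Hq; lia.
Qed.
Lemma Qd_ext n f g : (forall X, f X = g X) -> Qd n f -> Qd n g.
Proof. by move=> E [p [Hp Ep]]; exists p; split=> // X; rewrite -E. Qed.
Lemma Qd_sum (I : Type) (r : seq I) (P : pred I) n (F : I -> C -> C) :
  (forall i, P i -> Qd n (F i)) -> Qd n (fun X => \sum_(i <- r | P i) F i X).
Proof.
move=> H; elim: r => [|a r IH].
  by apply: (Qd_ext (f := fun=> 0)) (Qd_c _ _) => X; rewrite big_nil.
case Pa: (P a).
  apply: (Qd_ext (f := fun X => F a X + \sum_(i <- r | P i) F i X)).
    by move=> X; rewrite big_cons Pa.
  by have := Qd_add (H a Pa) IH; rewrite maxnn.
by apply: Qd_ext IH => X; rewrite big_cons Pa.
Qed.
Lemma Qd_prod (I : Type) (r : seq I) (d : I -> nat) (F : I -> C -> C) :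
  (forall i, Qd (d i) (F i)) -> Qd (\sum_(i <- r) d i) (fun X => \prod_(i <- r) F i X).
Proof.
move=> H; elim: r => [|a r IH].
  by rewrite big_nil; apply: (Qd_ext (f := fun=> 1)) (Qd_c _ _) => X; rewrite big_nil.
rewrite big_cons; apply: (Qd_ext (f := fun X => F a X * \prod_(i <- r) F i X)).
  by move=> X; rewrite big_cons.
exact: Qd_mul.
Qed.
End Qd.
Lemma Qd_c0 (C : fieldType) (c : C) : Qd 0 (fun _ => c).
Proof. exact: Qd_c. Qed.

Ltac qdrec := first [ apply: Qd_c0 | apply: Qd_x
  | eapply Qd_add; [qdrec|qdrec] | eapply Qd_opp; qdrec | eapply Qd_mul; [qdrec|qdrec] ].

Lemma entryQd (R : realType) (s zeta cc : R[i]) (a b c d : 'I_3) :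
  Qd (if (a < c)%N then 1 else 2)
    (fun X => rentry s zeta (X * cc) (idx9 a b).+1 (idx9 c d).+1).
Proof.
case: a => [[|[|[|a]]] Ha] //; case: b => [[|[|[|b]]] Hb] //;
case: c => [[|[|[|c]]] Hc] //; case: d => [[|[|[|d]]] Hd] //;
rewrite /idx9 /= !inordK //= /rentry /rd /ra /rb /rc /rcbar /=;
(eapply Qd_le; [qdrec | done]).
Qed.
Lemma exists_up L (g : 'I_L.+1 -> 'I_3) : (g ord0 < g ord_max)%N ->
  exists k : 'I_L, (g (widen_ord (leqnSn L) k) < g (lift ord0 k))%N.
Proof.
move=> H; apply/existsP; apply/contraT => /existsPn Hn.
have step : forall n, (n < L)%N -> (g (inord n.+1) <= g (inord n))%N.
  move=> n Hn'; have := Hn (Ordinal Hn'); rewrite -leqNgt.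
  have -> : widen_ord (leqnSn L) (Ordinal Hn') = inord n by apply/val_inj; rewrite /= inordK // ltnS ltnW.
  by have -> : lift ord0 (Ordinal Hn') = inord n.+1 by apply/val_inj; rewrite /= inordK.
have : forall n, (n <= L)%N -> (g (inord n) <= g ord0)%N.
  elim=> [_|n IH Hn1]; first by have -> : (inord 0 : 'I_L.+1) = ord0 by apply/val_inj; rewrite /= inordK.
  by apply: leq_trans (step n Hn1) (IH (ltnW Hn1)).
move=> /(_ L (leqnn L)).
have -> : (inord L : 'I_L.+1) = ord_max by apply/val_inj; rewrite /= inordK.
by rewrite leqNgt H.
Qed.

Lemma Tent_poly (R : realType) (s zeta : R[i]) L (mu : 'I_L -> R[i]) (al be : 'I_3) x y :
  (0 < L)%N -> (al < be)%N ->
  exists p : {poly R[i]}, (size p <= 2 * L)%N /\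
    forall t, Tent s zeta mu t al be x y = p.[cexp (2 * t)].
Proof.
move=> L0 Hab.
pose F := fun X => \sum_(g : {ffun 'I_L.+1 -> 'I_3} | (g ord0 == al) && (g ord_max == be))
    \prod_(k < L) rentry s zeta (X * cexp (- (2 * mu k)))
       (idx9 (g (widen_ord (leqnSn L) k)) (x k)).+1 (idx9 (g (lift ord0 k)) (y k)).+1.
have E : forall t, Tent s zeta mu t al be x y = F (cexp (2 * t)).
  move=> t; rewrite /Tent /F; apply: eq_bigr => g _; apply: eq_bigr => k _.
  by rewrite /Rent /Rmat mxE mulrBr cexpD.
have : Qd (2 * L - 1) F.
  apply: Qd_sum => g /andP [/eqP g0 /eqP gL].
  have [k0 Hk0] : exists k : 'I_L, (g (widen_ord (leqnSn L) k) < g (lift ord0 k))%N.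
    by apply: exists_up; rewrite g0 gL.
  pose d := fun k : 'I_L => if (g (widen_ord (leqnSn L) k) < g (lift ord0 k))%N then 1%N else 2%N.
  apply: (@Qd_le _ (\sum_(k <- index_enum 'I_L) d k)); first by apply: Qd_prod => k; apply: entryQd.
  have H1 : (\sum_(k < L) (d k + (k == k0)) <= \sum_(k < L) 2)%N.
    apply: leq_sum => k _; case: eqP => [->|_]; first by rewrite /d Hk0.
    by rewrite addn0 /d; case: ifP.
  move: H1; rewrite big_split /= sum_nat_const card_ord.
  have -> : (\sum_(i < L) (i == k0) = 1)%N.
    by rewrite (bigD1 k0) //= eqxx big1 => [|k /negbTE -> //].
  move=> H; apply: (@leq_trans (\sum_(i < L) d i)%N); first exact: leqnn.
  move: H; move: (\sum_(i < L) d i)%N => T H; clear -H; lia.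
case=> p [Hp Ep]; exists p; split.
  by apply: leq_trans Hp _; lia.
by move=> t; rewrite E Ep.
Qed.
Section Fold.
Variables (R : realType) (L : nat) (N : nat).
Local Notation C := R[i].
Definition Pp (f : C -> C) :=
  exists p : {poly C}, (size p <= N)%N /\ forall t, f t = p.[cexp (2 * t)].
Definition Pv (W : C -> state L -> C) := forall x, Pp (fun t => W t x).
Definition Pop (O : C -> state L -> state L -> C) := forall x y, Pp (fun t => O t x y).

Lemma Pp_ext f g : (forall t, f t = g t) -> Pp f -> Pp g.
Proof. by move=> E [p [Hp Ep]]; exists p; split=> // X; rewrite -E. Qed.
Lemma Pp_add f g : Pp f -> Pp g -> Pp (fun t => f t + g t).
Proof.
case=> p [Hp Ep] [q [Hq Eq]]; exists (p + q); split; last by move=> X; rewrite hornerD Ep Eq.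
by apply: leq_trans (size_add _ _) _; rewrite geq_max Hp Hq.
Qed.
Lemma Pp_scale c f : Pp f -> Pp (fun t => c * f t).
Proof.
case=> p [Hp Ep]; exists (c *: p); split; last by move=> X; rewrite hornerZ Ep.
exact: leq_trans (size_scale_leq _ _) Hp.
Qed.
Lemma Pp_scaler c f : Pp f -> Pp (fun t => f t * c).
Proof. by move=> H; apply: Pp_ext (Pp_scale c H) => t; rewrite mulrC. Qed.
Lemma Pp_sum (I : finType) (F : I -> C -> C) :
  (forall i, Pp (F i)) -> Pp (fun t => \sum_i F i t).
Proof.
move=> H; rewrite /index_enum; elim: (Finite.enum I) => [|a r IH].
  by exists 0; split=> [|t]; rewrite ?size_poly0 ?horner0 ?big_nil.
apply: (Pp_ext (f := fun t => F a t + \sum_(i <- r) F i t)).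
  by move=> t; rewrite big_cons.
exact: Pp_add.
Qed.

Lemma Pv_const_op (O : state L -> state L -> C) W : Pv W -> Pv (fun t => opapp O (W t)).
Proof. move=> H x; rewrite /opapp; apply: Pp_sum => j; exact: Pp_scale. Qed.
Lemma Pv_op_const (O : C -> state L -> state L -> C) w : Pop O -> Pv (fun t => opapp (O t) w).
Proof. move=> H x; rewrite /opapp; apply: Pp_sum => j; exact: Pp_scaler. Qed.

Lemma foldA (K : eqType) (s : seq K) (ops : K -> C -> state L -> state L -> C) W :
  (forall k, k \in s -> forall t t', ops k t = ops k t') -> Pv W ->
  Pv (fun t => foldl (fun w k => opapp (ops k t) w) (W t) s).
Proof.
elim: s W => [|k s IH] W Hc HW //=.
apply: (IH (fun t => opapp (ops k t) (W t))).
  by move=> k' Hk'; apply: Hc; rewrite inE Hk' orbT.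
move=> x; apply: (Pp_ext (f := fun t => opapp (ops k 0) (W t) x)).
  by move=> t; rewrite (Hc k _ t 0) // inE eqxx.
exact: Pv_const_op.
Qed.

Lemma foldB (K : eqType) (s : seq K) (ops : K -> C -> state L -> state L -> C) i w0 :
  uniq s -> i \in s -> (forall k, k != i -> forall t t', ops k t = ops k t') ->
  Pop (ops i) ->
  Pv (fun t => foldl (fun w k => opapp (ops k t) w) w0 s).
Proof.
move=> + + Hc Hi; elim: s w0 => [|k s IH] w0 //= /andP [ks us].
rewrite inE; case: eqP => [ki _|/eqP ki /= Is].
  rewrite -ki; have HA := @foldA K s ops (fun t => opapp (ops i t) w0).
  apply: HA.
    by move=> k' Hk' t t'; apply: Hc; apply: contraNneq ks => Ek'; rewrite -ki -Ek'.
  exact: Pv_op_const.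
move=> x; apply: (Pp_ext (f := fun t => foldl (fun w k0 => opapp (ops k0 t) w) (opapp (ops k 0) w0) s x)).
  by move=> t; rewrite (Hc k _ t 0) // eq_sym.
exact: IH.
Qed.
End Fold.
Theorem lemma2p2 (R : realType) (L : nat) (s zeta : R[i]) (mu : 'I_L -> R[i]) :
  (0 < L)%N -> s != 0 -> (zeta = s ^+ 2 \/ zeta = - (s ^+ 2) ^+ 3) ->
  (* in each x_i, 1 <= i <= L-1 *)
  (forall (lam : 'I_L.-1 -> R[i]) (v1 v2 : R[i]) (i : 'I_L.-1),
     exists p : {poly R[i]}, (size p <= 2 * L)%N /\
       forall t : R[i], Ffun s zeta mu (upd lam i t) v1 v2 = p.[cexp (2 * t)]) /\
  (forall (lam : 'I_L.-1 -> R[i]) (v1 v2 : R[i]) (i : 'I_L.-1),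
     exists p : {poly R[i]}, (size p <= 2 * L)%N /\
       forall t : R[i], Fbarfun s zeta mu (upd lam i t) v1 v2 = p.[cexp (2 * t)]) /\
  (* in y_1 *)
  (forall (lam : 'I_L.-1 -> R[i]) (v2 : R[i]),
     exists p : {poly R[i]}, (size p <= 2 * L)%N /\
       forall t : R[i], Ffun s zeta mu lam t v2 = p.[cexp (2 * t)]) /\
  (forall (lam : 'I_L.-1 -> R[i]) (v2 : R[i]),
     exists p : {poly R[i]}, (size p <= 2 * L)%N /\
       forall t : R[i], Fbarfun s zeta mu lam t v2 = p.[cexp (2 * t)]) /\
  (* in y_2 *)
  (forall (lam : 'I_L.-1 -> R[i]) (v1 : R[i]),
     exists p : {poly R[i]}, (size p <= 2 * L)%N /\
       forall t : R[i], Ffun s zeta mu lam v1 t = p.[cexp (2 * t)]) /\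
  (forall (lam : 'I_L.-1 -> R[i]) (v1 : R[i]),
     exists p : {poly R[i]}, (size p <= 2 * L)%N /\
       forall t : R[i], Fbarfun s zeta mu lam v1 t = p.[cexp (2 * t)]).
Proof.
move=> L0 _ _.
have HE : Pop (2 * L) (fun t => Eop s zeta mu t).
  move=> x y; apply: Tent_poly => //; by rewrite /i1 /i3 !inordK.
have HB : Pop (2 * L) (fun t => Bop s zeta mu t).
  move=> x y; apply: Tent_poly => //; by rewrite /i1 /i2 !inordK.
have HEu : forall (lam : 'I_L.-1 -> R[i]) i,
    Pop (2 * L) (fun t => Eop s zeta mu (upd lam i t i)).
  by move=> lam i x y; apply: Pp_ext (HE x y) => t; rewrite /upd eqxx.
have Hc : forall (lam : 'I_L.-1 -> R[i]) i k, k != i -> forall t t' : R[i],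
    Eop s zeta mu (upd lam i t k) = Eop s zeta mu (upd lam i t' k).
  by move=> lam i k ki t t'; rewrite /upd (negbTE ki).
have Hc' : forall (lam : 'I_L.-1 -> R[i]) (k : 'I_L.-1), k \in enum 'I_L.-1 -> forall t t' : R[i],
    (fun k (_ : R[i]) => Eop s zeta mu (lam k)) k t = (fun k (_ : R[i]) => Eop s zeta mu (lam k)) k t'.
  by [].
split.
  move=> lam v1 v2 i.
  exact (foldB _ (enum_uniq _) (mem_enum _ i) (Hc lam i) (HEu lam i) [ffun=> i3]).
split.
  move=> lam v1 v2 i.
  exact (Pv_const_op _ (Pv_const_op _
    (foldB _ (enum_uniq _) (mem_enum _ i) (Hc lam i) (HEu lam i))) [ffun=> i3]).
split.
  move=> lam v2.
  exact (foldA (Hc' lam) (Pv_const_op _ (Pv_op_const _ HB)) [ffun=> i3]).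
split.
  move=> lam v2.
  exact (Pv_const_op _ (Pv_op_const _ HB) [ffun=> i3]).
split.
  move=> lam v1.
  exact (foldA (Hc' lam) (Pv_op_const _ HB) [ffun=> i3]).
move=> lam v1.
exact: (Pv_op_const _ HB [ffun=> i3]).
Qed.
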